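(* If $G$ is a graph without universal vertices, then $\eta(G\lor K_1)=\eta(G)$.
   Context: All graphs are finite, simple and undirected. A vertex $v$ of $G$ is universal if $N(v)=V(G)\setminus\{v\}$, where $N(v)$ is its set of neighbours. $K_1$ is the graph with a single vertex. For disjoint graphs $G_1,G_2$, the join $G_1\lor G_2$ has vertex set $V(G_1)\cup V(G_2)$ and edge set $E(G_1)\cup E(G_2)\cup\{(u,v):u\in V(G_1),v\in V(G_2)\}$. For a positive integer $k$, $[k]=\{1,\dots,k\}$. For a labeling $f:V(G)\to[k]$ and $S\subseteq V(G)$, $f(S)=\sum_{u\in S}f(u)$. A labeling $f:V(G)\to[k]$ is an additive $k$-coloring if $f(N(u))\neq f(N(v))$ for every edge $(u,v)$ of $G$. The additive chromatic number $\eta(G)$ is the least $k$ for which $G$ has an additive $k$-coloring. *)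

(* Defs.v *)
From mathcomp Require Import all_boot.
Set Implicit Arguments. Unset Strict Implicit. Unset Printing Implicit Defensive.

(* A finite simple graph: vertex type T : finType, adjacency e : rel T,
   assumed symmetric and irreflexive (hypotheses of the theorem). *)

Definition universal (T : finType) (e : rel T) (v : T) : Prop :=
  forall w : T, w != v -> e v w.

Definition nbsum (T : finType) (e : rel T) (f : T -> nat) (u : T) : nat :=
  \sum_(w : T | e u w) f w.

Definition additive_coloring (T : finType) (e : rel T) (k : nat) (f : T -> nat) : Prop :=
  (forall v, 1 <= f v <= k) /\
  (forall u v, e u v -> nbsum e f u != nbsum e f v).

Definition has_additive_coloring (T : finType) (e : rel T) (k : nat) : Prop :=
  exists f : T -> nat, additive_coloring e k f.

Definition is_additive_chromatic_number (T : finType) (e : rel T) (k : nat) : Prop :=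
  0 < k /\ has_additive_coloring e k /\
  (forall j, 0 < j < k -> ~ has_additive_coloring e j).

(* The join G \/ K_1: vertex set option T, None is the new vertex,
   adjacent to every vertex of G; edges of G are kept. *)
Definition join_K1 (T : finType) (e : rel T) : rel (option T) :=
  fun x y => match x, y with
             | Some a, Some b => e a b
             | None, None => false
             | _, _ => true
             end.

(* Main.v *)
Require Import Defs.
From mathcomp Require Import all_boot.

Lemma sum_opt (T : finType) (P : pred (option T)) (F : option T -> nat) :
  \sum_(x | P x) F x = (if P None then F None else 0) + \sum_(a | P (Some a)) F (Some a).
Proof.
rewrite (bigID (fun x => x == None)) /=.
congr (_ + _).
  case: ifP => PN.
    by rewrite (big_pred1 None) // => -[a|] /=; rewrite ?andbF ?PN.
  rewrite big1 // => x /andP[Px /eqP ex]; by rewrite ex PN in Px.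
rewrite (reindex_omap Some id); last by move=> [a|] //= /andP[].
by apply: eq_bigl => a /=; rewrite eqxx !andbT.
Qed.

Lemma nb_some (T : finType) (e : rel T) (g : option T -> nat) u :
  nbsum (join_K1 e) g (Some u) = g None + nbsum e (fun a => g (Some a)) u.
Proof. by rewrite /nbsum sum_opt. Qed.

Lemma nb_none (T : finType) (e : rel T) (g : option T -> nat) :
  nbsum (join_K1 e) g None = \sum_(a : T) g (Some a).
Proof. by rewrite /nbsum sum_opt. Qed.

Lemma restrict (T : finType) (e : rel T) k g :
  additive_coloring (join_K1 e) k g -> additive_coloring e k (fun a => g (Some a)).
Proof.
move=> [H1 H2]; split => [v|u v euv]; first exact: H1.
have := H2 (Some u) (Some v) euv; by rewrite !nb_some eqn_add2l.
Qed.

Lemma key (T : finType) (e : rel T) (e_irr : irreflexive e)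
  (no_univ : forall v : T, ~ universal e v) k f u :
  additive_coloring e k f -> nbsum e f u + 2 <= \sum_(a : T) f a.
Proof.
move=> [H1 _].
have: ~~ [forall w, (w != u) ==> e u w].
  apply/negP => /forallP H; apply: (no_univ u) => w wu; exact: (implyP (H w) wu).
move/forallPn => [v]; rewrite negb_imply => /andP[vu nuv].
rewrite (bigID (e u)) /= leq_add2l.
rewrite (bigD1 u) /=; last by rewrite e_irr.
rewrite (bigD1 v) /=; last by rewrite nuv vu.
have := H1 u; have := H1 v => /andP[hv _] /andP[hu _].
rewrite addnA; apply: leq_trans (leq_addr _ _).
by rewrite -addn1 leq_add.
Qed.

Lemma extend (T : finType) (e : rel T) (e_irr : irreflexive e)
  (no_univ : forall v : T, ~ universal e v) k f :
  0 < k -> additive_coloring e k f -> additive_coloring (join_K1 e) k (fun x => oapp f 1 x).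
Proof.
move=> k0 Hf; have [H1 H2] := Hf; split.
  by move=> [a|]; [exact: H1 | rewrite /= k0].
have K := @key T e e_irr no_univ.
move=> [u|] [v|] //= euv.
- rewrite !nb_some eqn_add2l; exact: H2.
- rewrite nb_some nb_none /=; apply/negP => /eqP E.
  have := K k f u Hf; rewrite -E add1n addnC ltnn; done.
- rewrite nb_some nb_none /=; apply/negP => /eqP E.
  have := K k f v Hf; rewrite E add1n addnC ltnn; done.
Qed.

Theorem mainTheorem5 (T : finType) (e : rel T)
  (e_sym : symmetric e) (e_irr : irreflexive e)
  (no_univ : forall v : T, ~ universal e v) :
  forall k : nat,
    is_additive_chromatic_number (join_K1 e) k <-> is_additive_chromatic_number e k.
Proof.
have eqv : forall j, 0 < j -> has_additive_coloring (join_K1 e) j <-> has_additive_coloring e j.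
  move=> j j0; split => [[g Hg] | [f Hf]].
    by exists (fun a => g (Some a)); apply: restrict.
  by exists (fun x => oapp f 1 x); apply: extend.
move=> k; split => [[k0 [Hk Hmin]] | [k0 [Hk Hmin]]]; split => //; split.
- by apply/eqv.
- by move=> j /andP[j0 jk] H; apply: (Hmin j); rewrite ?j0 //; apply/eqv.
- by apply/eqv.
- by move=> j /andP[j0 jk] H; apply: (Hmin j); rewrite ?j0 //; apply/eqv.
Qed.
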